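(* Let $p$ and $q$ be distinct primes and $n=pq$. Let $c_0,\ldots,c_{n-1}$ be integers such that $$\sum_{k=0}^{n-1}c_k\zeta_n^{-k}=\frac{1}{1-\zeta_n^{-1}}.$$ Let $a_0=0$ and, for $j=1,\ldots,n-1$, let $a_j=\frac{1}{\zeta_n^{-j}-1}+\sum_{k=0}^{n-1}c_k\zeta_n^{-jk}$. Then $G=\mathrm{Circ}(a_0,\ldots,a_{n-1})$ is a non-dense circulant (i.e. $a_j=0$ for some $j\in\{1,\ldots,n-1\}$) with universal perfect state transfer.
   Context: $\zeta_n=e^{2\pi\mathtt{i}/n}$. $\mathrm{Circ}(a_0,\ldots,a_{n-1})$ denotes the $n\times n$ matrix $C$ with $C_{j,k}=a_{k-j}$ (indices mod $n$), viewed as the adjacency matrix of a weighted graph. A graph with adjacency matrix $A$ has universal perfect state transfer if for every pair of vertices $v,w$ there is $t>0$ with $|\langle w|e^{-\mathtt{i} At}|v\rangle|=1$. A circulant is dense if $a_j\ne0$ for all $j=1,\ldots,n-1$. *)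

(* Defs.v *)
From HB Require Import structures.
From mathcomp Require Import all_boot all_order all_algebra.
From mathcomp Require Import all_classical all_reals all_analysis.
From mathcomp Require Import complex.
Set Implicit Arguments. Unset Strict Implicit. Unset Printing Implicit Defensive.
Import Order.TTheory GRing.Theory Num.Theory.
Import numFieldNormedType.Exports.
Local Open Scope ring_scope.
Local Open Scope complex_scope.

Definition zeta (R : realType) (n : nat) : R[i] :=
  (cos (2 * pi / n%:R)) +i* (sin (2 * pi / n%:R)).

Definition circ (R : realType) (n : nat) (a : nat -> R[i]) : 'M[R[i]]_n :=
  \matrix_(j, k) a ((k + n - j) %% n)%N.

Definition mexp_partial (R : realType) (n : nat) (M : 'M[R[i]]_n) (N : nat)
  : 'M[R[i]]_n := \sum_(k < N) ((k`!)%:R)^-1 *: M ^+ k.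

Definition mexp (R : realType) (n : nat) (M : 'M[R[i]]_n) : 'M[R[i]]_n :=
  \matrix_(i, j)
    ((limn (fun N => complex.Re (mexp_partial M N i j))) +i*
     (limn (fun N => complex.Im (mexp_partial M N i j)))).

Definition evol (R : realType) (n : nat) (A : 'M[R[i]]_n) (t : R) : 'M[R[i]]_n :=
  mexp (- ('i * t%:C) *: A).

Definition UPST (R : realType) (n : nat) (A : 'M[R[i]]_n) : Prop :=
  forall v w : 'I_n, exists t : R, 0 < t /\ `|evol A t w v| = 1.

(* Main.v *)
Require Import Defs.
From HB Require Import structures.
From mathcomp Require Import all_boot all_order all_algebra.
From mathcomp Require Import all_classical all_reals all_analysis.
From mathcomp Require Import complex ring lra zify.
Set Implicit Arguments. Unset Strict Implicit. Unset Printing Implicit Defensive.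
Import Order.TTheory GRing.Theory Num.Theory.
Import numFieldNormedType.Exports.
Local Open Scope classical_set_scope.
Local Open Scope ring_scope.
Local Open Scope complex_scope.
Section A.
Variable R : realType.
Definition expi (x : R) : R[i] := cos x +i* sin x.
Lemma expiD x y : expi (x + y) = expi x * expi y.
Proof. by rewrite /expi cosD sinD; simpc; rewrite [sin x * cos y + _]addrC. Qed.
Lemma expi0 : expi 0 = 1.
Proof. by rewrite /expi cos0 sin0. Qed.
Lemma expiN x : expi (- x) = (expi x)^-1.
Proof.
have h : expi (- x) * expi x = 1 by rewrite -expiD addNr expi0.
have hx : expi x != 0.
  by apply/eqP => e; move: h; rewrite e mulr0 => /eqP; rewrite eq_sym oner_eq0.
by rewrite -[LHS]mulr1 -(divff hx) mulrA h mul1r.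
Qed.
Lemma expi_nat x k : expi (x *+ k) = expi x ^+ k.
Proof. elim: k => [|k ih]; first by rewrite mulr0n expi0. by rewrite mulrS expiD ih exprS. Qed.
Lemma norm_expi x : `|expi x| = 1.
Proof. by rewrite normc_def /= cos2Dsin2 sqrtr1. Qed.
Lemma expi2pi : expi (pi *+ 2) = 1.
Proof. by rewrite /expi cos2pi sin2pi. Qed.
Lemma expi2piz (r : int) : expi (pi *+ 2 * r%:~R) = 1.
Proof.
case: r => k.
  by rewrite -[Posz k]/(k%:Z) pmulrn mulr_natr expi_nat expi2pi expr1n.
by rewrite NegzE mulrNz mulrN expiN pmulrn mulr_natr expi_nat expi2pi expr1n invr1.
Qed.
Lemma zetaE n : zeta R n = expi (2 * pi / n%:R).
Proof. by []. Qed.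
Lemma zeta_exp n j : zeta R n ^+ j = expi ((2 * pi / n%:R) *+ j).
Proof. by rewrite zetaE expi_nat. Qed.

Lemma expi_neq1 x : 0 < x < pi *+ 2 -> expi x != 1.
Proof.
move=> /andP[x0 x2]; apply/negP => /eqP[c1 _].
have hs : 0 < sin (x / 2).
  apply: sin_gt0_pi; rewrite divr_gt0 //= ltr_pdivrMr // mulr_natr //.
have := cos_mulr2n (x / 2); rewrite mulr2n -splitr c1 => h.
have h2 : sin (x / 2) ^+ 2 = 0.
  have := cos2Dsin2 (x / 2); move: h; rewrite mulr2n; lra.
by move: hs; move/eqP: h2; rewrite sqrf_eq0 => /eqP ->; rewrite ltxx.
Qed.

Lemma zeta_prim n : (0 < n)%N -> n.-primitive_root (zeta R n).
Proof.
move=> n0; apply/andP; split => //; apply/forallP => i; rewrite unity_rootE.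
rewrite zeta_exp; apply/eqP.
have nR : (n%:R : R) != 0 by rewrite pnatr_eq0 -lt0n.
have pi0 := @pi_gt0 R.
have e (k : nat) : (2 * pi / n%:R : R) *+ k = pi *+ 2 * (k%:R / n%:R).
  by rewrite -[LHS]mulr_natr -[pi *+ 2]mulr_natr; ring.
case: (ltngtP i.+1 n) => h.
- apply/negbTE/expi_neq1; rewrite e; apply/andP; split.
    by apply: mulr_gt0; [rewrite pmulrn_rgt0 // | rewrite divr_gt0 ?ltr0n].
  rewrite gtr_pMr; last by rewrite pmulrn_rgt0 //; exact: pi0.
  by rewrite ltr_pdivrMr ?ltr0n // mul1r ltr_nat.
- by have := ltn_ord i; lia.
- by rewrite e h divff // mulr1 expi2pi eqxx.
Qed.
End A.
Section B.
Variable F : fieldType.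
Lemma geom0 (x : F) n : x ^+ n = 1 -> x != 1 -> \sum_(m < n) x ^+ m = 0.
Proof.
move=> xn x1; have := subrX1 x n; rewrite xn subrr => /esym/eqP.
by rewrite mulf_eq0 subr_eq0 (negbTE x1) /= => /eqP.
Qed.
Lemma wsum_gen (x : F) N :
  (x - 1) * \sum_(m < N) m%:R * x ^+ m = N%:R * x ^+ N - x * \sum_(m < N) x ^+ m.
Proof.
elim: N => [|N ih]; first by rewrite !big_ord0; ring.
rewrite !big_ord_recr /= mulrDr ih mulrDr exprS; ring.
Qed.
Lemma wsum (x : F) n : x ^+ n = 1 -> x != 1 ->
  (x - 1) * \sum_(m < n) m%:R * x ^+ m = n%:R.
Proof. by move=> xn x1; rewrite wsum_gen xn geom0 // mulr0 subr0 mulr1. Qed.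
Lemma sum_nat2 n : (\sum_(m < n) (m%:R : F)) * 2 = n%:R * (n%:R - 1).
Proof.
elim: n => [|n ih]; first by rewrite big_ord0 mul0r mul0r.
by rewrite big_ord_recr /= mulrDl ih -natr1; ring.
Qed.
End B.
Section C.
Variable R : realType.
Definition sN (N : nat) (x : R[i]) := \sum_(K < N) (K`!%:R)^-1 * x ^+ K.

Lemma ReMC (r : R) (z : R[i]) : complex.Re (r%:C * z) = r * complex.Re z.
Proof. by case: z => a b /=; simpc. Qed.
Lemma ImMC (r : R) (z : R[i]) : complex.Im (r%:C * z) = r * complex.Im z.
Proof. by case: z => a b /=; simpc. Qed.

Lemma cplxE (a b c d : R) : a = c -> b = d -> a +i* b = c +i* d.
Proof. by move=> -> ->. Qed.

Lemma mi_even k : (- 'i : R[i]) ^+ (k.*2) = ((-1) ^+ k)%:C.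
Proof.
elim: k => [|k ih]; first by rewrite expr0.
rewrite doubleS !exprS mulrA ih rmorphM /= rmorphN1; simpc; apply: cplxE; ring.
Qed.

Lemma mi_pow K : (- 'i : R[i]) ^+ K =
  ((~~ odd K)%:R * (-1) ^+ K./2) +i* (- ((odd K)%:R * (-1) ^+ K.-1./2)).
Proof.
have hK := odd_double_half K.
case: (odd K) hK => /= hK.
- have e : K.-1./2 = K./2 by rewrite -{1}hK add1n /= doubleK.
  have -> : (- 'i : R[i]) ^+ K = (- 'i) ^+ (K./2.*2).+1 by rewrite -{1}hK.
  rewrite e exprS mi_even; simpc; apply: cplxE; ring.
- have -> : (- 'i : R[i]) ^+ K = (- 'i) ^+ (K./2.*2) by rewrite -{1}hK.
  by rewrite mi_even; simpc; apply: cplxE; ring.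
Qed.

Lemma sN_Re (th : R) N : complex.Re (sN N (- 'i * th%:C)) = series (cos_coeff th) N.
Proof.
rewrite /sN /series /= raddf_sum big_mkord; apply: eq_bigr => K _.
rewrite exprMn -rmorphXn /= -(rmorph_nat (real_complex R)) -fmorphV /=.
by rewrite ReMC [_ * (th ^+ K)%:C]mulrC ReMC mi_pow /= /cos_coeff /= -exprnP; ring.
Qed.

Lemma sN_Im (th : R) N : complex.Im (sN N (- 'i * th%:C)) = - series (sin_coeff th) N.
Proof.
rewrite /sN /series /= raddf_sum big_mkord -sumrN; apply: eq_bigr => K _.
rewrite exprMn -rmorphXn /= -(rmorph_nat (real_complex R)) -fmorphV /=.
by rewrite ImMC [_ * (th ^+ K)%:C]mulrC ImMC mi_pow /= /sin_coeff /= ?exprnP; ring.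
Qed.
End C.
Section D.
Variable R : realType.
Lemma cvg_sumR (I : Type) (r : seq I) (f : I -> nat -> R) (l : I -> R) :
  (forall i, f i N @[N --> \oo] --> l i) ->
  (\sum_(i <- r) f i N) @[N --> \oo] --> \sum_(i <- r) l i.
Proof.
move=> h; elim: r => [|i r ih].
  rewrite big_nil; under eq_fun do rewrite big_nil; exact: cvg_cst.
rewrite big_cons; under eq_fun do rewrite big_cons.
exact: cvgD.
Qed.

Lemma ReM (x y : R[i]) : complex.Re (x * y) = complex.Re x * complex.Re y - complex.Im x * complex.Im y.
Proof. by case: x => a b; case: y => c d /=; simpc. Qed.
Lemma ImM (x y : R[i]) : complex.Im (x * y) = complex.Re x * complex.Im y + complex.Im x * complex.Re y.
Proof. by case: x => a b; case: y => c d /=; simpc. Qed.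

Lemma Re_sum (I : Type) (r : seq I) (f : I -> R[i]) :
  complex.Re (\sum_(i <- r) f i) = \sum_(i <- r) complex.Re (f i).
Proof. exact: raddf_sum. Qed.
Lemma Im_sum (I : Type) (r : seq I) (f : I -> R[i]) :
  complex.Im (\sum_(i <- r) f i) = \sum_(i <- r) complex.Im (f i).
Proof. exact: raddf_sum. Qed.

Lemma cos_cvg (x : R) : series (cos_coeff x) @ \oo --> cos x.
Proof. by have := @is_cvg_series_cos_coeff R x; rewrite unlock. Qed.
Lemma sin_cvg (x : R) : series (sin_coeff x) @ \oo --> sin x.
Proof. by have := @is_cvg_series_sin_coeff R x; rewrite unlock. Qed.

Lemma lim_entry n (b : 'I_n -> R[i]) (th : 'I_n -> R) :
  (limn (fun N => complex.Re (\sum_(m < n) b m * sN N (- 'i * (th m)%:C)))) +i*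
  (limn (fun N => complex.Im (\sum_(m < n) b m * sN N (- 'i * (th m)%:C)))) =
  \sum_(m < n) b m * expi (- th m).
Proof.
set T := \sum_(m < n) _ * expi _.
have -> : T = complex.Re T +i* complex.Im T by case: T.
congr Complex.
- apply: cvg_lim => //; rewrite /T Re_sum.
  under eq_fun do rewrite Re_sum.
  apply: cvg_sumR => m.
  under eq_fun do rewrite ReM sN_Re sN_Im.
  rewrite ReM /expi cosN sinN /=.
  apply: cvgB; apply: cvgM; try exact: cvg_cst.
    exact: cos_cvg.
  apply: cvgN; exact: sin_cvg.
- apply: cvg_lim => //; rewrite /T Im_sum.
  under eq_fun do rewrite Im_sum.
  apply: cvg_sumR => m.
  under eq_fun do rewrite ImM sN_Re sN_Im.
  rewrite ImM /expi cosN sinN /=.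
  apply: cvgD; apply: cvgM; try exact: cvg_cst.
    apply: cvgN; exact: sin_cvg.
  exact: cos_cvg.
Qed.
End D.
Section E.
Variable R : realType.
Variable n : nat.
Variable w : R[i].
Hypothesis hw : n.-primitive_root w.

Definition Fm : 'M[R[i]]_n := \matrix_(j, m) w ^+ ((n - j) * m).
Definition Gm : 'M[R[i]]_n := \matrix_(m, k) (n%:R^-1 * w ^+ (m * k)).

Lemma n_gt0 : (0 < n)%N. Proof. exact: prim_order_gt0 hw. Qed.
Lemma nR0 : (n%:R : R[i]) != 0.
Proof. by rewrite pnatr_eq0 -lt0n n_gt0. Qed.

Lemma FG : Fm *m Gm = 1%:M.
Proof.
apply/matrixP => j k; rewrite !mxE.
under eq_bigr do rewrite !mxE mulrCA -exprD [(_ * k)%N]mulnC -mulnDl exprM.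
rewrite -mulr_sumr.
have [->|jk] := eqVneq j k.
  have -> : w ^+ (n - k + k) = 1 by rewrite subnK ?(ltnW (ltn_ord k)) // (prim_expr_order hw).
  under eq_bigr do rewrite expr1n.
  by rewrite sumr_const card_ord mulVf ?nR0.
rewrite (@geom0 _ (w ^+ (n - j + k)) n) ?mulr0 ?(negbTE jk) //.
  by rewrite exprAC (prim_expr_order hw) expr1n.
rewrite -(prim_order_dvd hw).
have := ltn_ord j; have := ltn_ord k; move: jk; rewrite -val_eqE /=.
move: (nat_of_ord j) (nat_of_ord k) => a b ab bn an.
apply/negP => /dvdnP[q hq].
have : (q < 2)%N by nia.
by case: q hq => [|[|//]]; lia.
Qed.

Lemma GF : Gm *m Fm = 1%:M.
Proof. exact: mulmx1C FG. Qed.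

Lemma FDG_entry (d : 'rV[R[i]]_n) j k :
  (Fm *m diag_mx d *m Gm) j k = \sum_m Fm j m * d 0 m * Gm m k.
Proof.
rewrite mul_mx_diag !mxE; apply: eq_bigr => m _; by rewrite !mxE.
Qed.

Lemma FDG_pow (d : 'rV[R[i]]_n) K :
  (Fm *m diag_mx d *m Gm) ^+ K = Fm *m diag_mx (\row_m (d 0 m ^+ K)) *m Gm.
Proof.
elim: K => [|K ih].
  have -> : \row_m (d 0 m ^+ 0) = const_mx 1 by apply/matrixP => i j; rewrite !mxE.
  by rewrite diag_const_mx mulmx1 FG.
rewrite exprSr ih -!mulmxE -!mulmxA (mulmxA Gm) GF mul1mx (mulmxA (diag_mx _)) mulmx_diag.
by congr (_ *m (diag_mx _ *m _)); apply/matrixP => i j; rewrite !mxE exprSr.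
Qed.

Lemma mexp_partial_entry (d : 'rV[R[i]]_n) N j k :
  mexp_partial (Fm *m diag_mx d *m Gm) N j k =
  \sum_m Fm j m * sN N (d 0 m) * Gm m k.
Proof.
rewrite /mexp_partial summxE.
under eq_bigr do rewrite mxE FDG_pow FDG_entry mulr_sumr.
rewrite exchange_big /=; apply: eq_bigr => m _.
rewrite /sN mulr_sumr mulr_suml; apply: eq_bigr => K _; rewrite mxE; ring.
Qed.

Lemma FDG_scale (s : R[i]) (d : 'rV[R[i]]_n) :
  s *: (Fm *m diag_mx d *m Gm) = Fm *m diag_mx (s *: d) *m Gm.
Proof. by rewrite scalemxAl scalemxAr; congr (_ *m _ *m _); rewrite linearZ. Qed.
End E.
Section F.
Variable R : realType.
Variable n : nat.
Variable w : R[i].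
Hypothesis hw : n.-primitive_root w.
Variable c : nat -> int.

Definition Kc : R := (\sum_(k < n) (c k)%:~R) + (n%:R - 1) / 2.
Definition mu (m : nat) : R := m%:R + n%:R * (c m)%:~R - Kc.
Definition a' (l : nat) : R[i] :=
  if l == 0%N then 0 else (w ^+ l - 1)^-1 + \sum_(k < n) (c k)%:~R * w ^+ (l * k).

Lemma muC m : (mu m)%:C = m%:R + n%:R * (c m)%:~R - Kc%:C :> R[i].
Proof. by rewrite /mu rmorphB rmorphD rmorphM /= !(rmorph_nat (real_complex R)) (rmorph_int (real_complex R)). Qed.

Lemma sum_mu : \sum_(m < n) mu m = 0.
Proof.
rewrite /mu big_split /= big_split /= sumrN sumr_const card_ord -mulr_sumr.
have h := sum_nat2 R n.
rewrite /Kc; move: h.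
set S := \sum_(m < n) _; set T := \sum_(m < n) _.
move=> h; have -> : T = n%:R * (n%:R - 1) / 2 by rewrite -h mulfK ?pnatr_eq0.
by rewrite -[_ *+ n]mulr_natr; field.
Qed.

Lemma a_repr l : (l < n)%N -> a' l = n%:R^-1 * \sum_(m < n) (mu m)%:C * w ^+ (m * l).
Proof.
move=> ln; rewrite /a'; have [->|l0] := eqVneq l 0%N.
  under eq_bigr do rewrite muln0 expr0 mulr1.
  by rewrite -rmorph_sum /= sum_mu mulr0.
set x := w ^+ l.
have xn : x ^+ n = 1 by rewrite /x exprAC (prim_expr_order hw) expr1n.
have x1 : x != 1.
  by rewrite /x -(prim_order_dvd hw); apply/negP => /dvdn_leq; rewrite lt0n l0 leqNgt ln => /(_ isT).
have nR : (n%:R : R[i]) != 0 by rewrite pnatr_eq0 -lt0n (prim_order_gt0 hw).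
under eq_bigr do rewrite exprM -/x.
under [in RHS]eq_bigr do rewrite mulnC exprM -/x muC !mulrDl mulNr.
rewrite big_split /= big_split /= sumrN -!mulr_sumr geom0 // mulr0 subr0.
rewrite [X in _ = _ * (_ + X)](eq_bigr (fun i : 'I_n => n%:R * ((c i)%:~R * x ^+ i))); last by move=> i _; rewrite mulrA.
rewrite -mulr_sumr.
have hw2 := wsum xn x1.
have -> : \sum_(m < n) m%:R * x ^+ m = n%:R / (x - 1).
  by rewrite -hw2 [(x - 1) * _]mulrC mulfK // subr_eq0.
by field; rewrite nR subr_eq0 x1.
Qed.
End F.
Section G.
Variable R : realType.
Variable n : nat.
Variable w : R[i].
Hypothesis hw : n.-primitive_root w.
Variable c : nat -> int.

Lemma circ_eq : circ n (@a' R n w c) = Fm n w *m diag_mx (\row_m (@mu R n c m)%:C) *m Gm n w.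
Proof.
apply/matrixP => j k; rewrite FDG_entry /circ mxE (a_repr hw) ?ltn_mod ?(prim_order_gt0 hw) //.
rewrite mulr_sumr; apply: eq_bigr => m _; rewrite !mxE.
suff -> : w ^+ (m * ((k + n - j) %% n)) = w ^+ ((n - j) * m) * w ^+ (m * k) by ring.
rewrite -exprD; apply/eqP; rewrite (eq_prim_root_expr hw) modnMmr.
suff -> : (m * (k + n - j) = (n - j) * m + m * k)%N by [].
by rewrite [(k + n)%N]addnC -addnBAC ?(ltnW (ltn_ord j)) // mulnDr mulnC.
Qed.
End G.
Section H.
Variable R : realType.
Variable n : nat.
Variable w : R[i].
Hypothesis hw : n.-primitive_root w.
Variable c : nat -> int.
Variable t : R.

Lemma evol_entry j k : evol (circ n (@a' R n w c)) t j k =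
  \sum_m (Fm n w j m * Gm n w m k) * expi (- (t * @mu R n c m)).
Proof.
rewrite /evol (circ_eq hw) FDG_scale /mexp mxE.
have hS N : mexp_partial (Fm n w *m diag_mx (- ('i * t%:C) *: \row_m (@mu R n c m)%:C) *m Gm n w) N j k
   = \sum_m (Fm n w j m * Gm n w m k) * sN N (- 'i * (t * @mu R n c m)%:C).
  rewrite (mexp_partial_entry hw); apply: eq_bigr => m _; rewrite !mxE rmorphM /=.
  rewrite mulrAC; congr (_ * sN N _); ring.
under eq_fun do rewrite hS.
set u := limn (fun x : nat => complex.Re _).
under eq_fun do rewrite hS.
rewrite /u; exact: lim_entry.
Qed.
End H.
Lemma prim_inv (F : fieldType) n (z : F) : n.-primitive_root z -> n.-primitive_root z^-1.
Proof.
move=> hz; apply/andP; split; first exact: prim_order_gt0 hz.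
apply/forallP => i; rewrite unity_rootE exprVn invr_eq1 -(prim_order_dvd hz).
have := ltn_ord i; rewrite leq_eqVlt => /orP[/eqP ->|lt].
  by rewrite dvdnn eqxx.
by rewrite gtnNdvd // (ltn_eqF lt).
Qed.

Theorem proposition1 (R : realType) (p q : nat) (c : nat -> int) :
  prime p -> prime q -> p != q ->
  let n := (p * q)%N in
  let z := zeta R n in
  \sum_(k < n) (c k)%:~R * z ^- k = (1 - z^-1)^-1 ->
  let a := fun j : nat =>
    if j == 0%N then 0
    else (z ^- j - 1)^-1 + \sum_(k < n) (c k)%:~R * z ^- (j * k) in
  (exists j : nat, (0 < j < n)%N /\ a j = 0) /\ UPST (circ n a).
Proof.
move=> hp hq hpq n z hyp a.
have n1 : (1 < n)%N.
  by rewrite /n (leq_trans (prime_gt1 hp)) // leq_pmulr // prime_gt0.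
split.
  exists 1%N; split; first by rewrite n1.
  rewrite /a /=; under eq_bigr do rewrite mul1n.
  by rewrite hyp expr1 -opprB invrN addNr.
have hz : n.-primitive_root z by apply: zeta_prim; lia.
set w := z^-1.
have hw : n.-primitive_root w := prim_inv hz.
have -> : circ n a = circ n (@a' R n w c).
  apply/matrixP => j k; rewrite !mxE /a /a'.
  case: eqP => // _; rewrite /w exprVn; congr (_ + _).
  by apply: eq_bigr => m _; rewrite exprVn.
move=> v0 w0.
set k' := (n + (w0 + n - v0) %% n)%N.
set t : R := (2 * pi / n%:R) * k'%:R.
have nR : (n%:R : R) != 0 by rewrite pnatr_eq0; lia.
have pi0 := @pi_gt0 R.
exists t; split.
  rewrite /t; apply: mulr_gt0; last by rewrite ltr0n; lia.
  by apply: divr_gt0; [apply: mulr_gt0 | rewrite ltr0n; lia].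
rewrite (evol_entry hw).
have e m : - (t * @mu R n c m) =
      - ((2 * pi / n%:R) *+ (k' * m)) + (pi *+ 2 * (- c m)%:~R) *+ k' + t * Kc R n c.
  rewrite /t /mu -[(2 * pi / n%:R) *+ (k' * m)]mulr_natr -[(pi *+ 2 * _) *+ k']mulr_natr -[pi *+ 2]mulr_natr natrM mulrNz.
  by field.
have e2 m : expi (- (t * @mu R n c m)) = w ^+ (k' * m) * expi (t * Kc R n c).
  rewrite e !expiD expiN -zeta_exp expi_nat expi2piz expr1n mulr1 -/z /w exprVn //.
under eq_bigr do rewrite e2 mulrA.
rewrite -mulr_suml normrM norm_expi mulr1.
have hn : (0 < n)%N by lia.
have -> : \sum_m Fm n w w0 m * Gm n w m v0 * w ^+ (k' * m) = 1.
  have h1 (m : 'I_n) : Fm n w w0 m * Gm n w m v0 * w ^+ (k' * m) = n%:R^-1.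
    rewrite !mxE mulrCA -mulrA -!exprD -addnA.
    suff -> : w ^+ ((n - w0) * m + (m * v0 + k' * m)) = 1 by rewrite mulr1.
    apply/eqP; rewrite -(prim_order_dvd hw).
    have -> : ((n - w0) * m + (m * v0 + k' * m) = m * (n - w0 + v0 + k'))%N.
      by rewrite mulnDr mulnDr [(m * (n - w0))%N]mulnC [(m * k')%N]mulnC addnA.
    apply: dvdn_mull; rewrite /k' addnA /dvdn modnDmr.
    have -> : (n - w0 + v0 + n + (w0 + n - v0) = 3 * n)%N.
      have := ltn_ord w0; have := ltn_ord v0; lia.
    by rewrite modnMl.
  under eq_bigr do rewrite h1.
  rewrite sumr_const card_ord -[_ *+ n]mulr_natr mulVf // pnatr_eq0; lia.
by rewrite normr1.
Qed.
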